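(* Let $\boldsymbol\mu>\mathbf 0$, assume every matrix in $\mathcal Z(\boldsymbol\mu)$ is irreducible, and assume $\mathcal Z(\boldsymbol\mu)$ is a primitive set. For the iteration started from an arbitrary $\mathbf p^{(0)}>\mathbf 0$ — namely $y_i^{(k)}=\max_{k_i\in\mathcal K_i}\big(\mathbf e_i^T-\mathbf a_i^{k_i}(\boldsymbol\mu)\big)\mathbf p^{(k)}$, $\beta^{(k)}=\min_i p_i^{(k)}/y_i^{(k)}$, $\mathbf p^{(k+1)}=\mathbf y^{(k)}/\|\mathbf y^{(k)}\|$ — the sequence $\beta^{(k)}$ converges to $\beta^*=1/\max_{\mathbf Z\in\mathcal Z(\boldsymbol\mu)}\lambda(\mathbf Z)$, and $\mathbf p^{(k)}$ converges to a vector $\mathbf p^*$ such that $\lim_{\alpha\to\infty}\Gamma(\alpha\mathbf p^* )=\beta^*\boldsymbol\mu$.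
   Context: Multicast system: $N$ transmitters $T_1,\dots,T_N$; transmitter $T_i$ has $K_i\geq1$ receivers $R_i^{k}$, $k\in\mathcal K_i=\{1,\dots,K_i\}$. Channel gains $g_{r_i^{k},t_j}\geq 0$ (from $T_j$ to $R_i^k$) with $g_{r_i^{k},t_i}>0$; noise variance $\sigma^2>0$. SINR: $\gamma_i^{k}(\mathbf p)=\frac{g_{r_i^{k},t_i}p_i}{\sum_{j\neq i}g_{r_i^{k},t_j}p_j+\sigma^2}$, $\gamma_i(\mathbf p)=\min_{k\in\mathcal K_i}\gamma_i^k(\mathbf p)$, $\Gamma(\mathbf p)=(\gamma_1(\mathbf p),\dots,\gamma_N(\mathbf p))$. For $\boldsymbol\mu\in\mathbb R^N$, $\mathbf a_i^{k}(\boldsymbol\mu)\in\mathbb R^{1\times N}$ is the row vector with $i$-th entry $1$ and $j$-th entry $-\mu_i g_{r_i^{k},t_j}/g_{r_i^{k},t_i}$ for $j\neq i$. $\mathcal G(\boldsymbol\mu)$ is the set of $N\times N$ matrices whose $i$-th row is $\mathbf a_i^{k_i}(\boldsymbol\mu)$ for some $k_i\in\mathcal K_i$; $\mathcal Z(\boldsymbol\mu)=\{\mathbf I-\mathbf G:\mathbf G\in\mathcal G(\boldsymbol\mu)\}$. A finite set $\mathcal Z$ of nonnegative $N\times N$ matrices is primitive if there is a positive integer $n$ such that every product of $n$ matrices from $\mathcal Z$ (any order, repetitions allowed) has all entries positive. $\mathbf e_i$ is the $i$-th standard basis vector, $\|\cdot\|$ the Euclidean norm, $\lambda(\cdot)$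 the Perron–Frobenius eigenvalue (spectral radius). *)

(* Defs.v *)
From Stdlib Require Import Reals List Arith.
Open Scope R_scope.

(* Vectors are functions nat -> R, only indices 0..N-1 matter;
   matrices are functions nat -> nat -> R. *)

Fixpoint sumN (n : nat) (f : nat -> R) : R :=
  match n with O => 0 | S m => sumN m f + f m end.

Fixpoint maxN (n : nat) (f : nat -> R) : R :=
  match n with O => f O | S m => Rmax (maxN m f) (f (S m)) end.
Fixpoint minN (n : nat) (f : nat -> R) : R :=
  match n with O => f O | S m => Rmin (minN m f) (f (S m)) end.

Definition delta (i j : nat) : R := if Nat.eqb i j then 1 else 0.

(* g i k j = g_{r_i^k, t_j} (indices from 0): gain from T_j to R_i^k *)

Definition sinr_k (N : nat) (g : nat -> nat -> nat -> R) (sigma2 : R)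
  (p : nat -> R) (i k : nat) : R :=
  g i k i * p i /
  (sumN N (fun j => if Nat.eqb j i then 0 else g i k j * p j) + sigma2).
Definition sinr (N : nat) (K : nat -> nat) (g : nat -> nat -> nat -> R)
  (sigma2 : R) (p : nat -> R) (i : nat) : R :=
  minN (K i - 1) (fun k => sinr_k N g sigma2 p i k).

Definition a_row (mu : nat -> R) (g : nat -> nat -> nat -> R) (i k j : nat) : R :=
  if Nat.eqb j i then 1 else - (mu i * g i k j / g i k i).

Definition is_sel (N : nat) (K : nat -> nat) (s : nat -> nat) : Prop :=
  forall i, (i < N)%nat -> (s i < K i)%nat.

(* Z = I - G, where G in G(mu) has i-th row a_i^{s i}(mu) *)
Definition Zmat (mu : nat -> R) (g : nat -> nat -> nat -> R) (s : nat -> nat)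
  (i j : nat) : R := delta i j - a_row mu g i (s i) j.

Definition mat_mul (N : nat) (A B : nat -> nat -> R) (i j : nat) : R :=
  sumN N (fun l => A i l * B l j).
Fixpoint mat_pow (N : nat) (A : nat -> nat -> R) (m : nat) : nat -> nat -> R :=
  match m with O => delta | S m' => mat_mul N (mat_pow N A m') A end.

Definition irreducible (N : nat) (A : nat -> nat -> R) : Prop :=
  forall i j, (i < N)%nat -> (j < N)%nat -> exists m, mat_pow N A m i j > 0.

Definition primitive_set (N : nat) (K : nat -> nat) (mu : nat -> R)
  (g : nat -> nat -> nat -> R) : Prop :=
  exists n : nat, (1 <= n)%nat /\
    forall l : list (nat -> nat), length l = n -> Forall (is_sel N K) l ->
      forall i j, (i < N)%nat -> (j < N)%nat ->
        fold_right (fun s M => mat_mul N (Zmat mu g s) M) delta l i j > 0.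

(* (a + i b) is a (complex) eigenvalue of the real N x N matrix A:
   A (x + i y) = (a + i b)(x + i y) for some nonzero complex vector x + i y *)
Definition is_eigenvalue (N : nat) (A : nat -> nat -> R) (a b : R) : Prop :=
  exists x y : nat -> R,
    (exists i, (i < N)%nat /\ (x i <> 0 \/ y i <> 0)) /\
    forall i, (i < N)%nat ->
      sumN N (fun j => A i j * x j) = a * x i - b * y i /\
      sumN N (fun j => A i j * y j) = a * y i + b * x i.

Definition is_spectral_radius (N : nat) (A : nat -> nat -> R) (rho : R) : Prop :=
  (exists a b, is_eigenvalue N A a b /\ rho = sqrt (a ^ 2 + b ^ 2)) /\
  (forall a b, is_eigenvalue N A a b -> sqrt (a ^ 2 + b ^ 2) <= rho).

Definition is_max_spectral_radius (N : nat) (K : nat -> nat) (mu : nat -> R)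
  (g : nat -> nat -> nat -> R) (rho : R) : Prop :=
  (exists s, is_sel N K s /\ is_spectral_radius N (Zmat mu g s) rho) /\
  (forall s r, is_sel N K s -> is_spectral_radius N (Zmat mu g s) r -> r <= rho).

Definition yvec (N : nat) (K : nat -> nat) (mu : nat -> R)
  (g : nat -> nat -> nat -> R) (p : nat -> R) (i : nat) : R :=
  maxN (K i - 1)
    (fun k => sumN N (fun j => (delta i j - a_row mu g i k j) * p j)).

Definition enorm (N : nat) (y : nat -> R) : R := sqrt (sumN N (fun i => y i ^ 2)).

Fixpoint piter (N : nat) (K : nat -> nat) (mu : nat -> R)
  (g : nat -> nat -> nat -> R) (p0 : nat -> R) (k : nat) : nat -> R :=
  match k with
  | O => p0
  | S k' => let y := yvec N K mu g (piter N K mu g p0 k') in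
            fun i => y i / enorm N y
  end.

Definition beta_iter (N : nat) (K : nat -> nat) (mu : nat -> R)
  (g : nat -> nat -> nat -> R) (p0 : nat -> R) (k : nat) : R :=
  let p := piter N K mu g p0 k in
  minN (N - 1) (fun i => p i / yvec N K mu g p i).

Definition lim_infty (f : R -> R) (l : R) : Prop :=
  forall eps, eps > 0 -> exists M, forall alpha, alpha > M -> Rabs (f alpha - l) < eps.

(* Main.v *)
From Stdlib Require Import Reals List Arith Lra Lia Psatz FunctionalExtensionality.
Require Import Defs.
Open Scope R_scope.

Lemma sumN_ext n f h : (forall i, (i < n)%nat -> f i = h i) -> sumN n f = sumN n h.
Proof. induction n; simpl; intros H; auto. rewrite IHn by (intros; apply H; lia). rewrite H by lia; auto. Qed.

Lemma sumN_le n f h : (forall i, (i < n)%nat -> f i <= h i) -> sumN n f <= sumN n h.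
Proof. induction n; simpl; intros H; [lra|]. assert (H1 := H n ltac:(lia)). assert (sumN n f <= sumN n h) by (apply IHn; intros; apply H; lia). lra. Qed.

Lemma sumN_nonneg n f : (forall i, (i < n)%nat -> 0 <= f i) -> 0 <= sumN n f.
Proof. induction n; simpl; intros H; [lra|]. assert (H1 := H n ltac:(lia)). assert (0 <= sumN n f) by (apply IHn; intros; apply H; lia). lra. Qed.

Lemma sumN_plus n f h : sumN n (fun i => f i + h i) = sumN n f + sumN n h.
Proof. induction n; simpl; [lra|]. rewrite IHn; lra. Qed.

Lemma sumN_minus n f h : sumN n (fun i => f i - h i) = sumN n f - sumN n h.
Proof. induction n; simpl; [lra|]. rewrite IHn; lra. Qed.

Lemma sumN_scal n c f : sumN n (fun i => c * f i) = c * sumN n f.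
Proof. induction n; simpl; [lra|]. rewrite IHn; lra. Qed.

Lemma sumN_zero n : sumN n (fun _ => 0) = 0.
Proof. induction n; simpl; [lra|]. rewrite IHn; lra. Qed.

Lemma sumN_ge_term n f j : (forall i, (i < n)%nat -> 0 <= f i) -> (j < n)%nat -> f j <= sumN n f.
Proof. induction n; simpl; intros H Hj; [lia|].
  assert (0 <= sumN n f) by (apply sumN_nonneg; intros; apply H; lia).
  destruct (Nat.eq_dec j n).
  - subst; lra.
  - assert (f j <= sumN n f) by (apply IHn; [intros; apply H; lia| lia]).
    assert (H2 := H n ltac:(lia)); lra. Qed.

Lemma sumN_swap n m (f : nat -> nat -> R) :
  sumN n (fun i => sumN m (fun j => f i j)) = sumN m (fun j => sumN n (fun i => f i j)).
Proof. induction n; simpl. - rewrite sumN_zero; auto. - rewrite IHn, <- sumN_plus; auto. Qed.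

Lemma sumN_nz n f : sumN n f <> 0 -> exists j, (j < n)%nat /\ f j <> 0.
Proof. intros H. destruct (Classical_Prop.classic (exists j, (j < n)%nat /\ f j <> 0)) as [?|Hn]; auto.
  exfalso; apply H. rewrite (sumN_ext n f (fun _ => 0)). apply sumN_zero.
  intros i Hi. destruct (Req_dec (f i) 0); auto. exfalso; apply Hn; eauto. Qed.

Lemma maxN_ge n f i : (i <= n)%nat -> f i <= maxN n f.
Proof. induction n; simpl; intros H.
  - assert (i = 0%nat) by lia; subst; lra.
  - destruct (Nat.eq_dec i (S n)). + subst; apply Rmax_r.
    + eapply Rle_trans; [apply IHn; lia| apply Rmax_l]. Qed.

Lemma maxN_le n f a : (forall i, (i <= n)%nat -> f i <= a) -> maxN n f <= a.
Proof. induction n; simpl; intros H. - apply H; lia.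
  - apply Rmax_lub; [apply IHn; intros; apply H; lia| apply H; lia]. Qed.

Fixpoint argmaxN (n : nat) (f : nat -> R) : nat :=
  match n with O => O | S m => if Rle_dec (maxN m f) (f (S m)) then S m else argmaxN m f end.

Lemma argmaxN_spec n f : (argmaxN n f <= n)%nat /\ maxN n f = f (argmaxN n f).
Proof. induction n; simpl; [split; auto|]. unfold Rmax. destruct (Rle_dec (maxN n f) (f (S n))).
  - split; auto. - destruct IHn; split; auto. Qed.

Lemma maxN_scal n c f : 0 <= c -> maxN n (fun k => c * f k) = c * maxN n f.
Proof. intros Hc; induction n; simpl; auto. rewrite IHn. apply RmaxRmult; auto. Qed.

Lemma maxN_mono n f h : (forall i, (i <= n)%nat -> f i <= h i) -> maxN n f <= maxN n h.
Proof. intros H. apply maxN_le. intros i Hi. eapply Rle_trans; [apply H; auto| apply maxN_ge; auto]. Qed.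

Lemma maxN_ext n f h : (forall i, (i <= n)%nat -> f i = h i) -> maxN n f = maxN n h.
Proof. intros H; apply Rle_antisym; apply maxN_mono; intros; rewrite H; auto; lra. Qed.

Lemma minN_le n f i : (i <= n)%nat -> minN n f <= f i.
Proof. induction n; simpl; intros H.
  - assert (i = 0%nat) by lia; subst; lra.
  - destruct (Nat.eq_dec i (S n)). + subst; apply Rmin_r.
    + eapply Rle_trans; [apply Rmin_l| apply IHn; lia]. Qed.

Lemma minN_ge n f a : (forall i, (i <= n)%nat -> a <= f i) -> a <= minN n f.
Proof. induction n; simpl; intros H. - apply H; lia.
  - apply Rmin_glb; [apply IHn; intros; apply H; lia| apply H; lia]. Qed.

Lemma minN_attained n f : exists i, (i <= n)%nat /\ minN n f = f i.
Proof. induction n; simpl. - exists 0%nat; auto.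
  - destruct IHn as [i [Hi E]]. unfold Rmin. destruct (Rle_dec (minN n f) (f (S n))).
    + exists i; split; auto. + exists (S n); auto. Qed.

Lemma maxN_attained n f : exists i, (i <= n)%nat /\ maxN n f = f i.
Proof. exists (argmaxN n f); apply argmaxN_spec. Qed.

Lemma Rmax_dist a b c d : Rabs (Rmax a b - Rmax c d) <= Rabs (a - c) + Rabs (b - d).
Proof. unfold Rmax. destruct (Rle_dec a b), (Rle_dec c d);
  unfold Rabs; repeat destruct Rcase_abs; lra. Qed.

Lemma Un_cv_maxN n (F : nat -> nat -> R) (l : nat -> R) :
  (forall k, (k <= n)%nat -> Un_cv (fun t => F t k) (l k)) ->
  Un_cv (fun t => maxN n (F t)) (maxN n l).
Proof. induction n; simpl; intros H. - apply H; lia.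
  - intros eps Heps.
    destruct (IHn ltac:(intros; apply H; lia) (eps/2) ltac:(lra)) as [N1 H1].
    destruct (H (S n) ltac:(lia) (eps/2) ltac:(lra)) as [N2 H2].
    exists (Nat.max N1 N2); intros t Ht. unfold Rdist in *.
    eapply Rle_lt_trans; [apply Rmax_dist|].
    assert (A1 := H1 t ltac:(lia)); assert (A2 := H2 t ltac:(lia)). lra. Qed.

Lemma Un_cv_const c : Un_cv (fun _ => c) c.
Proof. intros eps He; exists 0%nat; intros; unfold Rdist; rewrite Rminus_diag, Rabs_R0; lra. Qed.

Lemma Un_cv_sumN n (F : nat -> nat -> R) (l : nat -> R) :
  (forall k, (k < n)%nat -> Un_cv (fun t => F t k) (l k)) ->
  Un_cv (fun t => sumN n (F t)) (sumN n l).
Proof. induction n; simpl; intros H. - apply Un_cv_const.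
  - apply CV_plus. + apply IHn; intros; apply H; lia. + apply H; lia. Qed.

Lemma Un_cv_ext u v l : (forall t, u t = v t) -> Un_cv u l -> Un_cv v l.
Proof. intros E H eps He; destruct (H eps He) as [N0 HN]; exists N0; intros; rewrite <- E; auto. Qed.

Lemma Un_cv_squeeze (u a b : nat -> R) l :
  (forall t, a t <= u t <= b t) -> Un_cv a l -> Un_cv b l -> Un_cv u l.
Proof. intros H Ha Hb eps He. destruct (Ha eps He) as [N1 H1]; destruct (Hb eps He) as [N2 H2].
  exists (Nat.max N1 N2); intros t Ht. assert (A1 := H1 t ltac:(lia)); assert (A2 := H2 t ltac:(lia)).
  specialize (H t). unfold Rdist in *. revert A1 A2; unfold Rabs; repeat destruct Rcase_abs; lra. Qed.

Definition Tg (N : nat) (K : nat -> nat) (W : nat -> nat -> nat -> R) (v : nat -> R) (i : nat) : R :=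
  maxN (K i - 1) (fun k => sumN N (fun j => W i k j * v j)).
Definition Zs (W : nat -> nat -> nat -> R) (s : nat -> nat) (i j : nat) : R := W i (s i) j.
Fixpoint Titer N K W (n : nat) (v : nat -> R) : nat -> R :=
  match n with O => v | S m => Tg N K W (Titer N K W m v) end.
Definition selat N K W v (i : nat) : nat :=
  argmaxN (K i - 1) (fun k => sumN N (fun j => W i k j * v j)).
Definition Pm N W (l : list (nat -> nat)) : nat -> nat -> R :=
  fold_right (fun s M => mat_mul N (Zs W s) M) delta l.

Definition Wpos N K (W : nat -> nat -> nat -> R) :=
  forall i k j, (i < N)%nat -> (k < K i)%nat -> (j < N)%nat -> 0 <= W i k j.
Definition Kpos N (K : nat -> nat) := forall i, (i < N)%nat -> (1 <= K i)%nat.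

Lemma T_sel N K W v i : Tg N K W v i = sumN N (fun j => W i (selat N K W v i) j * v j).
Proof. unfold Tg, selat. exact (proj2 (argmaxN_spec (K i - 1) (fun k => sumN N (fun j => W i k j * v j)))). Qed.

Lemma selat_sel N K W v : Kpos N K -> is_sel N K (selat N K W v).
Proof. intros HK i Hi. unfold selat. destruct (argmaxN_spec (K i - 1) (fun k => sumN N (fun j => W i k j * v j))).
  specialize (HK i Hi); lia. Qed.

Lemma T_ge_sel N K W v s i : is_sel N K s -> (i < N)%nat ->
  sumN N (fun j => W i (s i) j * v j) <= Tg N K W v i.
Proof. intros Hs Hi. unfold Tg. apply (maxN_ge _ (fun k => sumN N (fun j => W i k j * v j))).
  specialize (Hs i Hi); lia. Qed.

Lemma T_mono N K W u v i : Kpos N K -> Wpos N K W -> (forall j, (j < N)%nat -> u j <= v j) -> (i < N)%nat ->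
  Tg N K W u i <= Tg N K W v i.
Proof. intros HK HW H Hi. unfold Tg. apply maxN_mono. intros k Hk. apply sumN_le. intros j Hj.
  apply Rmult_le_compat_l; auto. apply HW; auto. specialize (HK i Hi); lia. Qed.

Lemma T_scal N K W v c i : 0 <= c -> Tg N K W (fun j => c * v j) i = c * Tg N K W v i.
Proof. intros Hc. unfold Tg. rewrite <- maxN_scal by auto. apply maxN_ext. intros k _.
  rewrite <- sumN_scal. apply sumN_ext; intros; ring. Qed.

Lemma T_ext N K W u v i : (forall j, (j < N)%nat -> u j = v j) -> Tg N K W u i = Tg N K W v i.
Proof. intros H. unfold Tg. apply maxN_ext. intros k _. apply sumN_ext. intros j Hj; rewrite H; auto. Qed.

Lemma Titer_ext N K W n u v : (forall j, (j < N)%nat -> u j = v j) ->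
  forall i, (i < N)%nat -> Titer N K W n u i = Titer N K W n v i.
Proof. induction n; simpl; intros H i Hi; auto. apply T_ext; intros; apply IHn; auto. Qed.

Lemma Titer_mono N K W n u v : Kpos N K -> Wpos N K W -> (forall j, (j < N)%nat -> u j <= v j) ->
  forall i, (i < N)%nat -> Titer N K W n u i <= Titer N K W n v i.
Proof. intros HK HW; induction n; simpl; intros H i Hi; auto. apply T_mono; auto. Qed.

Lemma Titer_scal N K W n v c : 0 <= c -> forall i, Titer N K W n (fun j => c * v j) i = c * Titer N K W n v i.
Proof. intros Hc; induction n; simpl; intros i; auto.
  rewrite (T_ext N K W _ (fun j => c * Titer N K W n v j)) by (intros; apply IHn). apply T_scal; auto. Qed.

Lemma Titer_add N K W a b v : Titer N K W (a + b) v = Titer N K W a (Titer N K W b v).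
Proof. induction a; simpl; auto. rewrite IHa; auto. Qed.

Lemma matvec N (a : nat -> R) (P : nat -> nat -> R) (w : nat -> R) :
  sumN N (fun k => a k * sumN N (fun j => P k j * w j)) = sumN N (fun j => sumN N (fun k => a k * P k j) * w j).
Proof.
  rewrite (sumN_ext N _ (fun k => sumN N (fun j => a k * (P k j * w j)))) by (intros; rewrite sumN_scal; auto).
  rewrite sumN_swap. apply sumN_ext; intros j _.
  rewrite Rmult_comm, <- sumN_scal. apply sumN_ext; intros; ring. Qed.

Lemma Pm_cons N W s l i j : Pm N W (s :: l) i j = sumN N (fun k => W i (s i) k * Pm N W l k j).
Proof. reflexivity. Qed.

Lemma sumN_delta_gen n i v : sumN n (fun j => delta i j * v j) = if Nat.ltb i n then v i else 0.
Proof. induction n; simpl; auto. rewrite IHn. unfold delta.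
  destruct (Nat.ltb_spec i n); destruct (Nat.ltb_spec i (S n)); destruct (Nat.eqb_spec i n); try lia; subst; ring. Qed.

Lemma sumN_delta n i v : (i < n)%nat -> sumN n (fun j => delta i j * v j) = v i.
Proof. intros H. rewrite sumN_delta_gen. destruct (Nat.ltb_spec i n); auto; lia. Qed.

Lemma Titer_exact N K W (HK : Kpos N K) n v : exists l, length l = n /\ Forall (is_sel N K) l /\
  forall i, (i < N)%nat -> Titer N K W n v i = sumN N (fun j => Pm N W l i j * v j).
Proof. induction n.
  - exists nil; repeat split; auto. intros i Hi. simpl. rewrite sumN_delta; auto.
  - destruct IHn as [l [Hl [Hs H]]]. exists (selat N K W (Titer N K W n v) :: l).
    repeat split; simpl; auto. constructor; auto. apply selat_sel; auto.
    intros i Hi. rewrite T_sel.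
    rewrite (sumN_ext N _ (fun k => W i (selat N K W (Titer N K W n v) i) k * sumN N (fun j => Pm N W l k j * v j)))
      by (intros; rewrite H; auto).
    rewrite matvec. auto.
Qed.

Lemma Titer_super N K W (HK : Kpos N K) (HW : Wpos N K W) n v w : exists l, length l = n /\ Forall (is_sel N K) l /\
  forall i, (i < N)%nat -> Titer N K W n v i + sumN N (fun j => Pm N W l i j * w j) <= Titer N K W n (fun j => v j + w j) i.
Proof. induction n.
  - exists nil; repeat split; auto. intros i Hi. simpl. rewrite sumN_delta; auto. lra.
  - destruct IHn as [l [Hl [Hs H]]]. set (s := selat N K W (Titer N K W n v)). exists (s :: l).
    repeat split; simpl; auto. constructor; auto. apply selat_sel; auto.
    intros i Hi.
    assert (M := T_mono N K W (fun j => Titer N K W n v j + sumN N (fun k => Pm N W l j k * w k))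
      (Titer N K W n (fun j => v j + w j)) i HK HW (fun j Hj => H j Hj) Hi).
    assert (G := T_ge_sel N K W (fun j => Titer N K W n v j + sumN N (fun k => Pm N W l j k * w k)) s i
      (selat_sel N K W _ HK) Hi).
    cbv beta in G. eapply Rle_trans; [| exact M]. eapply Rle_trans; [| exact G].
    rewrite (sumN_ext N (fun j => W i (s i) j * (Titer N K W n v j + sumN N (fun k => Pm N W l j k * w k)))
      (fun j => W i (s i) j * Titer N K W n v j + W i (s i) j * sumN N (fun k => Pm N W l j k * w k)))
      by (intros; ring).
    rewrite sumN_plus, matvec. unfold s; rewrite T_sel. fold s. right. reflexivity.
Qed.

Fixpoint sels (K : nat -> nat) (m : nat) : list (nat -> nat) :=
  match m with
  | O => (fun _ => O) :: nil
  | S m' => flat_map (fun s => map (fun v => fun i => if Nat.eqb i m' then v else s i) (seq 0 (K m'))) (sels K m')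
  end.

Lemma sels_cover K m s : (forall i, (i < m)%nat -> (s i < K i)%nat) ->
  exists s', In s' (sels K m) /\ forall i, (i < m)%nat -> s' i = s i.
Proof. induction m; intros H.
  - exists (fun _ => O); split; [left; auto| intros; lia].
  - destruct IHm as [s' [Hin Hs']]. intros; apply H; lia.
    exists (fun i => if Nat.eqb i m then s m else s' i). split.
    + simpl. apply in_flat_map. exists s'; split; auto. apply in_map_iff. exists (s m); split; auto.
      apply in_seq. assert (H1 := H m ltac:(lia)). lia.
    + intros i Hi. destruct (Nat.eqb_spec i m); subst; auto. apply Hs'; lia.
Qed.

Lemma sels_valid K m s' : In s' (sels K m) -> forall i, (i < m)%nat -> (s' i < K i)%nat.
Proof. revert s'; induction m; simpl; intros s' Hin i Hi; [lia|].
  apply in_flat_map in Hin. destruct Hin as [s [Hs Hin]]. apply in_map_iff in Hin.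
  destruct Hin as [v [E Hv]]; subst. apply in_seq in Hv.
  destruct (Nat.eqb_spec i m); subst; [lia|]. apply IHm; auto; lia. Qed.

Fixpoint lsels N K (n : nat) : list (list (nat -> nat)) :=
  match n with
  | O => nil :: nil
  | S n' => flat_map (fun s => map (cons s) (lsels N K n')) (sels K N)
  end.

Definition eqN N (a b : nat -> nat) := forall i, (i < N)%nat -> a i = b i.

Lemma lsels_cover N K n l : length l = n -> Forall (is_sel N K) l ->
  exists l', In l' (lsels N K n) /\ Forall2 (eqN N) l' l.
Proof. revert l; induction n; intros l Hl Hs.
  - destruct l; simpl in Hl; try lia. exists nil; split; [left; auto| constructor].
  - destruct l as [|a l]; simpl in Hl; try lia. inversion Hs; subst.
    destruct (IHn l ltac:(lia) H2) as [l' [Hin Hf]].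
    destruct (sels_cover K N a H1) as [a' [Ha Ea]].
    exists (a' :: l'); split.
    + simpl. apply in_flat_map. exists a'; split; auto. apply in_map; auto.
    + constructor; auto.
Qed.

Lemma lsels_valid N K n l' : In l' (lsels N K n) -> length l' = n /\ Forall (is_sel N K) l'.
Proof. revert l'; induction n; simpl; intros l' Hin.
  - destruct Hin as [E|[]]; subst; auto.
  - apply in_flat_map in Hin. destruct Hin as [s [Hs Hin]]. apply in_map_iff in Hin.
    destruct Hin as [l0 [E Hl0]]; subst. destruct (IHn l0 Hl0). simpl; split; auto.
    constructor; auto. intros i Hi; apply (sels_valid K N s Hs); auto.
Qed.

Lemma Pm_equiv N W l' l : Forall2 (eqN N) l' l -> forall i j, (i < N)%nat -> (j < N)%nat -> Pm N W l' i j = Pm N W l i j.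
Proof. induction 1; intros i j Hi Hj; auto. rewrite !Pm_cons. rewrite (H i Hi). apply sumN_ext.
  intros k Hk. rewrite IHForall2; auto. Qed.

Lemma fin1 M (h : nat -> R) : (forall i, (i < M)%nat -> 0 < h i) ->
  exists c C, 0 < c /\ forall i, (i < M)%nat -> c <= h i <= C.
Proof. induction M; intros H. - exists 1, 1; split; [lra| intros; lia].
  - destruct IHM as [c [C [Hc HB]]]. intros; apply H; lia.
    assert (H0 := H M ltac:(lia)).
    exists (Rmin c (h M)), (Rmax C (h M)); split. apply Rmin_glb_lt; auto.
    intros i Hi. destruct (Nat.eq_dec i M). subst; split; [apply Rmin_r| apply Rmax_r].
    destruct (HB i ltac:(lia)). split.
    eapply Rle_trans; [apply Rmin_l| auto]. eapply Rle_trans; [eauto| apply Rmax_l]. Qed.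

Lemma fin2 M1 M2 (h : nat -> nat -> R) : (forall i j, (i < M1)%nat -> (j < M2)%nat -> 0 < h i j) ->
  exists c C, 0 < c /\ forall i j, (i < M1)%nat -> (j < M2)%nat -> c <= h i j <= C.
Proof. induction M1; intros H. - exists 1, 1; split; [lra| intros; lia].
  - destruct IHM1 as [c [C [Hc HB]]]. intros; apply H; lia.
    destruct (fin1 M2 (h M1)) as [c' [C' [Hc' HB']]]. intros; apply H; lia.
    exists (Rmin c c'), (Rmax C C'); split. apply Rmin_glb_lt; auto.
    intros i j Hi Hj. destruct (Nat.eq_dec i M1).
    + subst. destruct (HB' j Hj); split. eapply Rle_trans; [apply Rmin_r| auto]. eapply Rle_trans; [eauto| apply Rmax_r].
    + destruct (HB i j ltac:(lia) Hj). split.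
      eapply Rle_trans; [apply Rmin_l| auto]. eapply Rle_trans; [eauto| apply Rmax_l]. Qed.

Lemma finL {A : Type} (L : list A) M (f : A -> nat -> nat -> R) :
  (forall a, In a L -> forall i j, (i < M)%nat -> (j < M)%nat -> 0 < f a i j) ->
  exists c C, 0 < c /\ forall a, In a L -> forall i j, (i < M)%nat -> (j < M)%nat -> c <= f a i j <= C.
Proof. induction L as [|a L IH]; intros H. - exists 1, 1; split; [lra| intros a []].
  - destruct IH as [c [C [Hc HB]]]. intros; apply H; auto; right; auto.
    destruct (fin2 M M (f a)) as [c' [C' [Hc' HB']]]. intros; apply H; auto; left; auto.
    exists (Rmin c c'), (Rmax C C'); split. apply Rmin_glb_lt; auto.
    intros b Hb i j Hi Hj. destruct Hb as [E|Hb].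
    + subst. destruct (HB' i j Hi Hj); split. eapply Rle_trans; [apply Rmin_r| auto]. eapply Rle_trans; [eauto| apply Rmax_r].
    + destruct (HB b Hb i j Hi Hj). split.
      eapply Rle_trans; [apply Rmin_l| auto]. eapply Rle_trans; [eauto| apply Rmax_l]. Qed.

Lemma Pm_bounds N K W n :
  (forall l, length l = n -> Forall (is_sel N K) l -> forall i j, (i < N)%nat -> (j < N)%nat -> Pm N W l i j > 0) ->
  exists c C, 0 < c /\ forall l, length l = n -> Forall (is_sel N K) l ->
    forall i j, (i < N)%nat -> (j < N)%nat -> c <= Pm N W l i j <= C.
Proof. intros H. destruct (finL (lsels N K n) N (Pm N W)) as [c [C [Hc HB]]].
  - intros a Ha. destruct (lsels_valid N K n a Ha). apply H; auto.
  - exists c, C; split; auto. intros l Hl Hs i j Hi Hj.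
    destruct (lsels_cover N K n l Hl Hs) as [l' [Hin Hf]].
    rewrite <- (Pm_equiv N W l' l Hf i j Hi Hj). apply HB; auto. Qed.

Definition Prim N K W n := (1 <= n)%nat /\
  forall l, length l = n -> Forall (is_sel N K) l -> forall i j, (i < N)%nat -> (j < N)%nat -> Pm N W l i j > 0.

Definition vpos N (v : nat -> R) := forall i, (i < N)%nat -> 0 < v i.

Lemma row_nz N K W n (HW : Wpos N K W) (HP : Prim N K W n) s i : is_sel N K s -> (i < N)%nat ->
  exists j, (j < N)%nat /\ 0 < W i (s i) j.
Proof. intros Hs Hi. destruct HP as [Hn HP]. destruct n as [|n']; [lia|].
  assert (H := HP (s :: repeat s n') ltac:(simpl; rewrite repeat_length; auto)
     ltac:(constructor; auto; apply Forall_forall; intros x Hx; apply repeat_spec in Hx; subst; auto) i i Hi Hi).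
  rewrite Pm_cons in H. destruct (sumN_nz N (fun k => W i (s i) k * Pm N W (repeat s n') k i) ltac:(lra)) as [j [Hj Hnz]].
  exists j; split; auto. assert (0 <= W i (s i) j) by (apply HW; auto). destruct (Req_dec (W i (s i) j) 0).
  rewrite H1 in Hnz; lra. lra. Qed.

Lemma T_pos N K W n (HK : Kpos N K) (HW : Wpos N K W) (HP : Prim N K W n) v : vpos N v -> vpos N (Tg N K W v).
Proof. intros Hv i Hi. set (s := selat N K W v). destruct (row_nz N K W n HW HP s i (selat_sel N K W v HK) Hi) as [j [Hj Wp]].
  eapply Rlt_le_trans; [| apply (T_ge_sel N K W v s i (selat_sel N K W v HK) Hi)].
  eapply Rlt_le_trans; [| apply (sumN_ge_term N (fun j => W i (s i) j * v j) j); auto].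
  apply Rmult_lt_0_compat; auto. intros k Hk. apply Rmult_le_pos; [apply HW; auto; apply (selat_sel N K W v HK); auto| left; apply Hv; auto]. Qed.

Lemma Titer_pos N K W n (HK : Kpos N K) (HW : Wpos N K W) (HP : Prim N K W n) k v : vpos N v -> vpos N (Titer N K W k v).
Proof. intros Hv; induction k; simpl; auto. eapply T_pos; eauto. Qed.

Definition mr N K W v := minN (N - 1) (fun i => Tg N K W v i / v i).
Definition Mr N K W v := maxN (N - 1) (fun i => Tg N K W v i / v i).

Lemma mr_le N K W v i : vpos N v -> (i < N)%nat -> mr N K W v * v i <= Tg N K W v i.
Proof. intros Hv Hi. unfold mr. assert (H := minN_le (N-1) (fun i => Tg N K W v i / v i) i ltac:(lia)).
  specialize (Hv i Hi). apply (Rmult_le_compat_r (v i)) in H; [|lra]. field_simplify in H; lra. Qed.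

Lemma Mr_ge N K W v i : vpos N v -> (i < N)%nat -> Tg N K W v i <= Mr N K W v * v i.
Proof. intros Hv Hi. unfold Mr. assert (H := maxN_ge (N-1) (fun i => Tg N K W v i / v i) i ltac:(lia)).
  specialize (Hv i Hi). apply (Rmult_le_compat_r (v i)) in H; [|lra]. field_simplify in H; lra. Qed.

Lemma mr_ge N K W v a : (1 <= N)%nat -> vpos N v -> (forall i, (i < N)%nat -> a * v i <= Tg N K W v i) -> a <= mr N K W v.
Proof. intros HN Hv H. unfold mr. apply minN_ge. intros i Hi. specialize (H i ltac:(lia)). specialize (Hv i ltac:(lia)).
  apply (Rmult_le_reg_r (v i)); auto. field_simplify; lra. Qed.

Lemma Mr_le N K W v a : (1 <= N)%nat -> vpos N v -> (forall i, (i < N)%nat -> Tg N K W v i <= a * v i) -> Mr N K W v <= a.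
Proof. intros HN Hv H. unfold Mr. apply maxN_le. intros i Hi. specialize (H i ltac:(lia)). specialize (Hv i ltac:(lia)).
  apply (Rmult_le_reg_r (v i)); auto. field_simplify; lra. Qed.

Lemma mr_le_Mr N K W v : (1 <= N)%nat -> vpos N v -> mr N K W v <= Mr N K W v.
Proof. intros HN Hv. unfold mr, Mr. eapply Rle_trans; [apply (minN_le _ _ 0%nat); lia| apply (maxN_ge _ (fun i => Tg N K W v i / v i) 0%nat); lia]. Qed.

Lemma mr_pos N K W n (HN : (1 <= N)%nat) (HK : Kpos N K) (HW : Wpos N K W) (HP : Prim N K W n) v : vpos N v -> 0 < mr N K W v.
Proof. intros Hv. unfold mr. destruct (minN_attained (N-1) (fun i => Tg N K W v i / v i)) as [i [Hi E]].
  rewrite E. apply Rdiv_lt_0_compat; [eapply T_pos; eauto; lia| apply Hv; lia]. Qed.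

Lemma mr_mono N K W n (HN : (1 <= N)%nat) (HK : Kpos N K) (HW : Wpos N K W) (HP : Prim N K W n) v :
  vpos N v -> mr N K W v <= mr N K W (Tg N K W v).
Proof. intros Hv. assert (Hm := mr_pos N K W n HN HK HW HP v Hv).
  apply mr_ge; auto. eapply T_pos; eauto. intros i Hi.
  rewrite <- T_scal by lra. apply T_mono; auto. intros; apply mr_le; auto. Qed.

Lemma Mr_mono N K W n (HN : (1 <= N)%nat) (HK : Kpos N K) (HW : Wpos N K W) (HP : Prim N K W n) v :
  vpos N v -> Mr N K W (Tg N K W v) <= Mr N K W v.
Proof. intros Hv. assert (Hm := mr_pos N K W n HN HK HW HP v Hv). assert (mr N K W v <= Mr N K W v) by (apply mr_le_Mr; auto).
  apply Mr_le; auto. eapply T_pos; eauto. intros i Hi.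
  rewrite <- T_scal by lra. apply T_mono; auto. intros; apply Mr_ge; auto. Qed.

Lemma Titer_T N K W n y i : Tg N K W (Titer N K W n y) i = Titer N K W n (Tg N K W y) i.
Proof. change (Titer N K W (S n) y i = Titer N K W n (Titer N K W 1 y) i). rewrite <- Titer_add, Nat.add_1_r. auto. Qed.

Lemma contraction N K W n (HN : (1 <= N)%nat) (HK : Kpos N K) (HW : Wpos N K W) (HP : Prim N K W n) c C
  (Hc : 0 < c) (HB : forall l, length l = n -> Forall (is_sel N K) l ->
    forall i j, (i < N)%nat -> (j < N)%nat -> c <= Pm N W l i j <= C) y (Hy : vpos N y) :
  Mr N K W (Titer N K W n y) - mr N K W (Titer N K W n y) <= (1 - c / C) * (Mr N K W y - mr N K W y).
Proof.
  set (x := Tg N K W y). set (al := mr N K W y). set (be := Mr N K W y). set (S := sumN N y).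
  set (u := Titer N K W n y).
  set (A := sumN N (fun j => x j - al * y j)). set (B := sumN N (fun j => be * y j - x j)).
  assert (HAB : A + B = (be - al) * S).
  { unfold A, B, S. rewrite <- sumN_plus, <- sumN_scal. apply sumN_ext; intros; ring. }
  assert (HxA : forall j, (j < N)%nat -> 0 <= x j - al * y j) by (intros j Hj; unfold x, al; assert (H := mr_le N K W y j Hy Hj); lra).
  assert (HxB : forall j, (j < N)%nat -> 0 <= be * y j - x j) by (intros j Hj; unfold x, be; assert (H := Mr_ge N K W y j Hy Hj); lra).
  assert (HA : 0 <= A) by (apply sumN_nonneg; auto). assert (HB0 : 0 <= B) by (apply sumN_nonneg; auto).
  assert (HS : 0 < S) by (unfold S; eapply Rlt_le_trans; [apply (Hy 0%nat); lia| apply (sumN_ge_term N y 0%nat); [intros; left; apply Hy; auto| lia]]).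
  assert (Hal : 0 < al) by (apply (mr_pos N K W n); auto).
  assert (Halbe : al <= be) by (apply mr_le_Mr; auto).
  assert (Hu : vpos N u) by (apply (Titer_pos N K W n); auto).
  assert (HCc : c <= C).
  { destruct HP as [Hn _]. destruct (HB (repeat (fun _ => O) n) (repeat_length _ _)
      ltac:(apply Forall_forall; intros z Hz; apply repeat_spec in Hz; subst; intros i Hi; simpl; specialize (HK i Hi); lia)
      0%nat 0%nat ltac:(lia) ltac:(lia)). lra. }
  assert (HC : 0 < C) by lra.
  assert (Hup : forall i, (i < N)%nat -> u i <= C * S).
  { intros i Hi. destruct (Titer_exact N K W HK n y) as [l [Hl [Hs E]]]. unfold u; rewrite E by auto.
    unfold S; rewrite <- sumN_scal. apply sumN_le. intros j Hj. destruct (HB l Hl Hs i j Hi Hj).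
    apply Rmult_le_compat_r; auto. left; apply Hy; auto. }
  assert (Hlow : forall i, (i < N)%nat -> al * u i + c * A <= Tg N K W u i).
  { intros i Hi. destruct (Titer_super N K W HK HW n (fun j => al * y j) (fun j => x j - al * y j)) as [l [Hl [Hs E]]].
    specialize (E i Hi). rewrite Titer_scal in E by lra.
    rewrite (Titer_ext N K W n (fun j => al * y j + (x j - al * y j)) x) in E by (intros; try ring; auto).
    unfold u; rewrite Titer_T. fold x. eapply Rle_trans; [| exact E]. apply Rplus_le_compat_l.
    unfold A; rewrite <- sumN_scal. apply sumN_le. intros j Hj. destruct (HB l Hl Hs i j Hi Hj).
    apply Rmult_le_compat_r; auto. }
  assert (Hhigh : forall i, (i < N)%nat -> Tg N K W u i + c * B <= be * u i).
  { intros i Hi. destruct (Titer_super N K W HK HW n x (fun j => be * y j - x j)) as [l [Hl [Hs E]]].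
    specialize (E i Hi).
    rewrite (Titer_ext N K W n (fun j => x j + (be * y j - x j)) (fun j => be * y j)) in E by (intros; try ring; auto).
    rewrite Titer_scal in E by lra.
    unfold u; rewrite Titer_T. fold x. eapply Rle_trans; [| exact E]. apply Rplus_le_compat_l.
    unfold B; rewrite <- sumN_scal. apply sumN_le. intros j Hj. destruct (HB l Hl Hs i j Hi Hj).
    apply Rmult_le_compat_r; auto. }
  assert (H1 : al + c * A / (C * S) <= mr N K W u).
  { apply mr_ge; auto. intros i Hi. specialize (Hlow i Hi). specialize (Hup i Hi). specialize (Hu i Hi).
    assert (c * A / (C * S) * u i <= c * A).
    { assert (Hq : u i / (C * S) <= 1).
      { apply (Rmult_le_reg_r (C * S)); [nra|]. unfold Rdiv; rewrite Rmult_assoc, Rinv_l; nra. }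
      replace (c * A / (C * S) * u i) with (c * A * (u i / (C * S))) by (unfold Rdiv; ring).
      assert (0 <= c * A) by nra. nra. }
    nra. }
  assert (H2 : mr N K W u <= Mr N K W u) by (apply mr_le_Mr; auto).
  assert (H3 : Mr N K W u <= be - c * B / (C * S)).
  { apply Mr_le; auto. intros i Hi. specialize (Hhigh i Hi). specialize (Hup i Hi). specialize (Hu i Hi).
    assert (c * B / (C * S) * u i <= c * B).
    { assert (Hq : u i / (C * S) <= 1).
      { apply (Rmult_le_reg_r (C * S)); [nra|]. unfold Rdiv; rewrite Rmult_assoc, Rinv_l; nra. }
      replace (c * B / (C * S) * u i) with (c * B * (u i / (C * S))) by (unfold Rdiv; ring).
      assert (0 <= c * B) by nra. nra. }
    nra. }
  fold u. assert (E : c * A / (C * S) + c * B / (C * S) = c / C * (be - al)).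
  { replace (c * A / (C * S) + c * B / (C * S)) with (c * (A + B) / (C * S)) by (field; nra).
    rewrite HAB. field. nra. }
  fold be al. nra.
Qed.

Lemma sumN_const n a : sumN n (fun _ => a) = INR n * a.
Proof. induction n; simpl sumN; [simpl; ring|]. rewrite IHn, S_INR; ring. Qed.

Lemma sumN_split a b f : sumN (a + b) f = sumN a f + sumN b (fun i => f (a + i)%nat).
Proof. induction b; simpl. - rewrite Nat.add_0_r; ring. - rewrite Nat.add_succ_r; simpl. rewrite IHb; ring. Qed.

Section Cau.
Context (u e : nat -> R) (n : nat) (th : R).
Hypothesis Hn : (1 <= n)%nat.
Hypothesis Hth : 0 <= th < 1.
Hypothesis He0 : forall k, 0 <= e k.
Hypothesis Hdec : forall k, e (S k) <= e k.
Hypothesis Hcon : forall k, e (n + k)%nat <= th * e k.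
Hypothesis Hlim : Un_cv e 0.
Hypothesis Hdiff : forall k, Rabs (u (S k) - u k) <= e k.

Lemma e_dec_le a b : (a <= b)%nat -> e b <= e a.
Proof. induction 1; [lra| eapply Rle_trans; [apply Hdec| auto]]. Qed.

Lemma sum_tail j : forall k, sumN j (fun i => e (k + i)%nat) <= INR n * e k / (1 - th).
Proof.
  induction j as [j IH] using lt_wf_ind. intros k.
  assert (Hn' : 1 <= INR n) by (apply (le_INR 1); auto).
  assert (Hq : INR n * e k <= INR n * e k / (1 - th)).
  { assert (0 <= INR n * e k) by (specialize (He0 k); nra).
    assert (1 <= / (1 - th)) by (rewrite <- Rinv_1; apply Rinv_le_contravar; lra).
    unfold Rdiv; nra. }
  destruct (le_lt_dec j n) as [Hj|Hj].
  - eapply Rle_trans; [| exact Hq]. eapply Rle_trans; [apply (sumN_le j _ (fun _ => e k))|].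
    + intros i Hi. apply e_dec_le; lia.
    + rewrite sumN_const. apply Rmult_le_compat_r; auto. apply le_INR; auto.
  - replace j with (n + (j - n))%nat by lia. rewrite sumN_split.
    assert (H1 : sumN n (fun i => e (k + i)%nat) <= INR n * e k).
    { eapply Rle_trans; [apply (sumN_le n _ (fun _ => e k))|]. intros i Hi; apply e_dec_le; lia. rewrite sumN_const; lra. }
    assert (H2 : sumN (j - n) (fun i => e (k + (n + i))%nat) <= INR n * e (n + k)%nat / (1 - th)).
    { rewrite (sumN_ext _ _ (fun i => e ((n + k) + i)%nat)) by (intros; f_equal; lia). apply IH; lia. }
    assert (H3 := Hcon k).
    assert (H4 : INR n * e (n + k)%nat / (1 - th) <= INR n * (th * e k) / (1 - th)).
    { unfold Rdiv. apply Rmult_le_compat_r; [left; apply Rinv_0_lt_compat; lra|]. apply Rmult_le_compat_l; lra. }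
    assert (E : INR n * e k + INR n * (th * e k) / (1 - th) = INR n * e k / (1 - th)) by (field; lra).
    lra.
Qed.

Lemma diff_sum j k : Rabs (u (k + j)%nat - u k) <= sumN j (fun i => e (k + i)%nat).
Proof. induction j; simpl. - rewrite Nat.add_0_r, Rminus_diag, Rabs_R0; lra.
  - rewrite Nat.add_succ_r. specialize (Hdiff (k + j)%nat).
    replace (u (S (k + j)) - u k) with ((u (S (k + j)) - u (k + j)%nat) + (u (k + j)%nat - u k)) by ring.
    eapply Rle_trans; [apply Rabs_triang| lra]. Qed.

Lemma cauchy_geom : Cauchy_crit u.
Proof.
  intros eps Heps. assert (Hn' : 1 <= INR n) by (apply (le_INR 1); auto).
  destruct (Hlim (eps * (1 - th) / (3 * INR n))) as [K0 HK0].
  { apply Rdiv_lt_0_compat; [apply Rmult_lt_0_compat; lra| lra]. }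
  exists K0. intros a b Ha Hb. specialize (HK0 K0 (le_n _)). unfold Rdist in *. rewrite Rminus_0_r in HK0.
  rewrite Rabs_right in HK0 by (apply Rle_ge; auto).
  assert (Hb1 := diff_sum (a - K0) K0). assert (Hb2 := diff_sum (b - K0) K0).
  replace (K0 + (a - K0))%nat with a in Hb1 by lia. replace (K0 + (b - K0))%nat with b in Hb2 by lia.
  assert (T1 := sum_tail (a - K0) K0). assert (T2 := sum_tail (b - K0) K0).
  assert (Q : INR n * e K0 / (1 - th) < eps / 3).
  { apply (Rmult_lt_reg_r (1 - th)); [lra|]. unfold Rdiv at 1. rewrite Rmult_assoc, Rinv_l, Rmult_1_r by lra.
    apply (Rmult_lt_reg_r (/ INR n)); [apply Rinv_0_lt_compat; lra|].
    replace (INR n * e K0 * / INR n) with (e K0) by (field; lra).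
    replace (eps / 3 * (1 - th) * / INR n) with (eps * (1 - th) / (3 * INR n)) by (field; lra). auto. }
  replace (u a - u b) with ((u a - u K0) - (u b - u K0)) by ring.
  eapply Rle_lt_trans; [apply Rabs_triang|]. rewrite Rabs_Ropp. lra.
Qed.
End Cau.

Fixpoint pit N K W (p0 : nat -> R) (k : nat) : nat -> R :=
  match k with
  | O => p0
  | S k' => let y := Tg N K W (pit N K W p0 k') in fun i => y i / enorm N y
  end.

Lemma sumN_sq_nonneg N y : 0 <= sumN N (fun i => y i ^ 2).
Proof. apply sumN_nonneg; intros; apply pow2_ge_0. Qed.

Lemma enorm_scal N c y : 0 <= c -> enorm N (fun i => c * y i) = c * enorm N y.
Proof. intros Hc. unfold enorm.
  rewrite (sumN_ext N _ (fun i => (c * c) * y i ^ 2)) by (intros; ring).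
  rewrite sumN_scal, sqrt_mult_alt by nra. rewrite sqrt_square; auto. Qed.

Lemma enorm_pos N y : (1 <= N)%nat -> vpos N y -> 0 < enorm N y.
Proof. intros HN Hy. unfold enorm. apply sqrt_lt_R0.
  eapply Rlt_le_trans; [| apply (sumN_ge_term N (fun i => y i ^ 2) 0%nat); [intros; apply pow2_ge_0| lia]].
  specialize (Hy 0%nat ltac:(lia)). nra. Qed.

Lemma enorm_mono N u v : (forall i, (i < N)%nat -> 0 <= u i <= v i) -> enorm N u <= enorm N v.
Proof. intros H. unfold enorm. apply sqrt_le_1_alt. apply sumN_le. intros i Hi. specialize (H i Hi). nra. Qed.

Lemma enorm1_comp N y i : enorm N y = 1 -> (i < N)%nat -> 0 <= y i -> y i <= 1.
Proof. intros E Hi Hy. unfold enorm in E.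
  assert (S1 : sumN N (fun i => y i ^ 2) = 1).
  { rewrite <- (sqrt_sqrt (sumN N (fun i => y i ^ 2))) by apply sumN_sq_nonneg. rewrite E; ring. }
  assert (y i ^ 2 <= 1) by (rewrite <- S1; apply (sumN_ge_term N (fun i => y i ^ 2)); auto; intros; apply pow2_ge_0).
  nra. Qed.

Lemma lim_le u l b : Un_cv u l -> (forall k, u k <= b) -> l <= b.
Proof. intros Hu Hb. destruct (Rle_dec l b) as [|Hn]; auto. exfalso.
  destruct (Hu (l - b) ltac:(lra)) as [N0 HN0]. specialize (HN0 N0 (le_n _)). specialize (Hb N0).
  unfold Rdist in HN0. revert HN0; unfold Rabs; destruct Rcase_abs; lra. Qed.

Lemma lim_ge u l b : Un_cv u l -> (forall k, b <= u k) -> b <= l.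
Proof. intros Hu Hb. destruct (Rle_dec b l) as [|Hn]; auto. exfalso.
  destruct (Hu (b - l) ltac:(lra)) as [N0 HN0]. specialize (HN0 N0 (le_n _)). specialize (Hb N0).
  unfold Rdist in HN0. revert HN0; unfold Rabs; destruct Rcase_abs; lra. Qed.

Lemma Un_cv_shift u l m : Un_cv u l -> Un_cv (fun k => u (m + k)%nat) l.
Proof. intros H eps He. destruct (H eps He) as [N0 HN0]. exists N0; intros k Hk. apply HN0; lia. Qed.

Lemma Un_cv_minus u v a b : Un_cv u a -> Un_cv v b -> Un_cv (fun k => u k - v k) (a - b).
Proof. intros Hu Hv. apply CV_minus; auto. Qed.

Lemma Un_cv_scal u a c : Un_cv u a -> Un_cv (fun k => c * u k) (c * a).
Proof. intros Hu. apply (CV_mult (fun _ => c)); auto. apply Un_cv_const. Qed.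

Lemma Rdiv_le_0_compat a b : 0 <= a -> 0 < b -> 0 <= a / b.
Proof. intros. unfold Rdiv. apply Rmult_le_pos; auto. left; apply Rinv_0_lt_compat; auto. Qed.

Section Iter.
Context (N : nat) (K : nat -> nat) (W : nat -> nat -> nat -> R) (n : nat) (p0 : nat -> R) (c C : R).
Hypothesis HN : (1 <= N)%nat.
Hypothesis HK : Kpos N K.
Hypothesis HW : Wpos N K W.
Hypothesis HP : Prim N K W n.
Hypothesis Hp0 : vpos N p0.
Hypothesis Hc : 0 < c.
Hypothesis HB : forall l, length l = n -> Forall (is_sel N K) l ->
    forall i j, (i < N)%nat -> (j < N)%nat -> c <= Pm N W l i j <= C.

Definition z k := Titer N K W k p0.
Definition mk k := mr N K W (z k).
Definition Mk k := Mr N K W (z k).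

Lemma z_pos k : vpos N (z k).
Proof. apply (Titer_pos N K W n); auto. Qed.

Lemma mk_grow k : mk k <= mk (S k).
Proof. unfold mk; apply (mr_mono N K W n); auto. apply z_pos. Qed.
Lemma Mk_dec k : Mk (S k) <= Mk k.
Proof. unfold Mk; apply (Mr_mono N K W n); auto. apply z_pos. Qed.
Lemma mk_Mk k : mk k <= Mk k.
Proof. apply mr_le_Mr; auto. apply z_pos. Qed.
Lemma mk_pos k : 0 < mk k.
Proof. apply (mr_pos N K W n); auto. apply z_pos. Qed.

Lemma mk_grow_le a b : (a <= b)%nat -> mk a <= mk b.
Proof. induction 1; [lra| eapply Rle_trans; [apply IHle| apply mk_grow]]. Qed.
Lemma Mk_dec_le a b : (a <= b)%nat -> Mk b <= Mk a.
Proof. induction 1; [lra| eapply Rle_trans; [apply Mk_dec| apply IHle]]. Qed.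

Lemma mk_le_Mk a b : mk a <= Mk b.
Proof. eapply Rle_trans; [apply (mk_grow_le a (Nat.max a b)); lia|].
  eapply Rle_trans; [apply mk_Mk| apply Mk_dec_le; lia]. Qed.

Lemma gap_contr k : Mk (n + k) - mk (n + k) <= (1 - c / C) * (Mk k - mk k).
Proof. unfold Mk, mk, z. rewrite Titer_add. apply (contraction N K W n); auto. apply z_pos. Qed.

Lemma Cpos : c <= C.
Proof. destruct HP as [Hn _]. destruct (HB (repeat (fun _ => O) n) (repeat_length _ _)
      ltac:(apply Forall_forall; intros x Hx; apply repeat_spec in Hx; subst; intros i Hi; simpl; specialize (HK i Hi); lia)
      0%nat 0%nat ltac:(lia) ltac:(lia)). lra. Qed.

Lemma lam_exists : { lam : R | Un_cv mk lam /\ Un_cv Mk lam }.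
Proof.
  destruct (growing_cv mk) as [l1 H1].
  { intro k; apply mk_grow. }
  { exists (Mk 0%nat). intros x [k E]; subst. apply mk_le_Mk. }
  destruct (decreasing_cv Mk) as [l2 H2].
  { intro k; apply Mk_dec. }
  { exists (- mk 0%nat). intros x [k E]; subst. unfold opp_seq. assert (H := mk_le_Mk 0 k). lra. }
  exists l1. split; auto.
  assert (L12 : l1 <= l2).
  { apply (lim_ge Mk l2 l1 H2). intro k. apply (lim_le mk l1 (Mk k) H1). intro j; apply mk_le_Mk. }
  assert (Hg := Un_cv_minus Mk mk l2 l1 H2 H1).
  assert (Hg2 := Un_cv_shift _ _ n Hg).
  assert (Hd := Un_cv_minus _ _ _ _ (Un_cv_scal _ _ (1 - c / C) Hg) Hg2). simpl in Hd.
  assert (Hge := lim_ge _ _ 0 Hd ltac:(intro k; assert (H := gap_contr k); lra)).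
  assert (0 < c / C) by (apply Rdiv_lt_0_compat; auto; assert (H := Cpos); lra).
  assert (l2 - l1 <= 0) by nra.
  replace l1 with l2 by lra. auto.
Qed.


Definition lam := proj1_sig lam_exists.
Lemma lam_cv : Un_cv mk lam /\ Un_cv Mk lam.
Proof. exact (proj2_sig lam_exists). Qed.
Lemma mk_le_lam k : mk k <= lam.
Proof. apply (growing_ineq mk); [intro; apply mk_grow| apply lam_cv]. Qed.
Lemma lam_le_Mk k : lam <= Mk k.
Proof. apply (decreasing_ineq Mk); [intro; apply Mk_dec| apply lam_cv]. Qed.
Lemma lam_pos : 0 < lam.
Proof. eapply Rlt_le_trans; [apply (mk_pos 0)| apply mk_le_lam]. Qed.

Lemma pit_scaled k : exists ck, 0 < ck /\ forall i, pit N K W p0 k i = ck * z k i.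
Proof. induction k.
  - exists 1; split; [lra| intros; simpl; unfold z; simpl; ring].
  - destruct IHk as [ck [Hck E]].
    assert (Ep : pit N K W p0 k = fun i => ck * z k i) by (apply functional_extensionality; auto).
    assert (Ty : Tg N K W (pit N K W p0 k) = fun i => ck * z (S k) i).
    { rewrite Ep. apply functional_extensionality; intros i. rewrite T_scal by lra. auto. }
    assert (Hn : 0 < enorm N (z (S k))) by (apply enorm_pos; auto; apply z_pos).
    exists (/ enorm N (z (S k))). split; [apply Rinv_0_lt_compat; auto|].
    intros i. simpl. rewrite Ty. rewrite enorm_scal by lra. field. split; lra. Qed.

Lemma pit_pos k : vpos N (pit N K W p0 k).
Proof. destruct (pit_scaled k) as [ck [Hck E]]. intros i Hi. rewrite E. apply Rmult_lt_0_compat; auto. apply z_pos; auto. Qed.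

Lemma pit_bounds k i : (i < N)%nat ->
  mk k * pit N K W p0 k i <= Tg N K W (pit N K W p0 k) i <= Mk k * pit N K W p0 k i.
Proof. intros Hi. destruct (pit_scaled k) as [ck [Hck E]].
  assert (Ep : pit N K W p0 k = fun i => ck * z k i) by (apply functional_extensionality; auto).
  rewrite Ep, T_scal by lra.
  assert (H1 := mr_le N K W (z k) i (z_pos k) Hi). assert (H2 := Mr_ge N K W (z k) i (z_pos k) Hi).
  unfold mk, Mk. split; nra. Qed.

Lemma pit_norm k : enorm N (pit N K W p0 (S k)) = 1.
Proof. simpl. set (y := Tg N K W (pit N K W p0 k)).
  assert (Hy : 0 < enorm N y) by (apply enorm_pos; auto; unfold y; eapply T_pos; eauto; apply pit_pos).
  rewrite (functional_extensionality (fun i => y i / enorm N y) (fun i => / enorm N y * y i)) by (intros; unfold Rdiv; ring).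
  rewrite enorm_scal by (left; apply Rinv_0_lt_compat; auto). field; lra. Qed.

Lemma pit_step k i : (i < N)%nat ->
  Rabs (pit N K W p0 (S (S k)) i - pit N K W p0 (S k) i) <= (Mk (S k) - mk (S k)) / mk 0.
Proof. intros Hi. set (p := pit N K W p0 (S k)). change (pit N K W p0 (S (S k)) i) with
    (Tg N K W p i / enorm N (Tg N K W p)).
  set (r := enorm N (Tg N K W p)).
  assert (Hp := pit_pos (S k)). fold p in Hp.
  assert (Hb := pit_bounds (S k)). fold p in Hb.
  assert (Hn := pit_norm k). fold p in Hn.
  set (m := mk (S k)) in *. set (M := Mk (S k)) in *.
  assert (Hm0 := mk_pos 0). assert (Hm0m : mk 0 <= m) by (apply mk_grow_le; lia).
  assert (Hr1 : m <= r).
  { unfold r. rewrite <- (Rmult_1_r m), <- Hn, <- enorm_scal by lra. apply enorm_mono.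
    intros j Hj. destruct (Hb j Hj). specialize (Hp j Hj). split; nra. }
  assert (Hr2 : r <= M).
  { unfold r. rewrite <- (Rmult_1_r M), <- Hn, <- enorm_scal by (assert (H := mk_Mk (S k)); fold m M in H; lra).
    apply enorm_mono. intros j Hj. destruct (Hb j Hj). specialize (Hp j Hj).
    split; [left; apply (T_pos N K W n HK HW HP p (pit_pos (S k)) j Hj)|]. auto. }
  destruct (Hb i Hi) as [B1 B2]. specialize (Hp i Hi).
  assert (Hpi : p i <= 1) by (apply (enorm1_comp N p i); auto; lra).
  assert (Hr : 0 < r) by lra.
  replace (Tg N K W p i / r - p i) with ((Tg N K W p i - r * p i) / r) by (field; lra).
  apply Rabs_le. split.
  - apply (Rmult_le_reg_r r); auto. unfold Rdiv. rewrite Rmult_assoc, Rinv_l by lra.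
    assert ((M - m) / mk 0 * r >= M - m).
    { unfold Rdiv. assert (r * / mk 0 >= 1). { apply Rle_ge. apply (Rmult_le_reg_r (mk 0)); auto.
        rewrite Rmult_assoc, Rinv_l by lra. lra. } nra. }
    nra.
  - apply (Rmult_le_reg_r r); auto. unfold Rdiv. rewrite Rmult_assoc, Rinv_l by lra.
    assert ((M - m) * / mk 0 * r >= M - m).
    { assert (r * / mk 0 >= 1). { apply Rle_ge. apply (Rmult_le_reg_r (mk 0)); auto.
        rewrite Rmult_assoc, Rinv_l by lra. lra. } assert (m <= M) by lra. nra. }
    nra.
Qed.


Lemma r_bounds k : mk (S k) <= enorm N (Tg N K W (pit N K W p0 (S k))) <= Mk (S k).
Proof. set (p := pit N K W p0 (S k)).
  assert (Hp := pit_pos (S k)). fold p in Hp.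
  assert (Hb := pit_bounds (S k)). fold p in Hb.
  assert (Hn := pit_norm k). fold p in Hn.
  assert (H := mk_Mk (S k)). assert (Hm := mk_pos (S k)).
  split.
  { rewrite <- (Rmult_1_r (mk (S k))), <- Hn, <- enorm_scal by lra. apply enorm_mono.
    intros j Hj. destruct (Hb j Hj). specialize (Hp j Hj). split; nra. }
  { rewrite <- (Rmult_1_r (Mk (S k))), <- Hn, <- enorm_scal by lra.
    apply enorm_mono. intros j Hj. destruct (Hb j Hj).
    split; [left; apply (T_pos N K W n HK HW HP p (pit_pos (S k)) j Hj)|]. auto. }
Qed.

Definition theta := Rmax 0 (1 - c / C).

Lemma gap_cv : Un_cv (fun k => Mk k - mk k) 0.
Proof. replace 0 with (lam - lam) by ring. apply Un_cv_minus; apply lam_cv. Qed.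

Definition useq i k := if lt_dec i N then pit N K W p0 (S k) i else 0.

Lemma useq_cauchy i : Cauchy_crit (useq i).
Proof. destruct HP as [Hn _].
  assert (HcC : 0 < c / C) by (apply Rdiv_lt_0_compat; auto; assert (H := Cpos); lra).
  assert (Hm0 := mk_pos 0).
  apply (cauchy_geom (useq i) (fun k => (Mk (S k) - mk (S k)) / mk 0) n theta); auto.
  - unfold theta. split; [apply Rmax_l| apply Rmax_lub_lt; lra].
  - intros k. apply Rdiv_le_0_compat; auto. assert (H := mk_Mk (S k)); lra.
  - intros k. apply Rmult_le_compat_r; [left; apply Rinv_0_lt_compat; auto|].
    assert (H1 := mk_grow (S k)); assert (H2 := Mk_dec (S k)); lra.
  - intros k. replace (S (n + k)) with (n + S k)%nat by lia. assert (H := gap_contr (S k)). unfold Rdiv.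
    rewrite <- Rmult_assoc. apply Rmult_le_compat_r; [left; apply Rinv_0_lt_compat; auto|].
    assert (H0 := mk_Mk (S k)). unfold theta. assert (1 - c / C <= Rmax 0 (1 - c / C)) by apply Rmax_r.
    eapply Rle_trans; [exact H|]. apply Rmult_le_compat_r; lra.
  - replace 0 with (0 / mk 0) by (field; lra). unfold Rdiv. apply (CV_mult _ (fun _ => / mk 0)).
    + exact (Un_cv_shift _ _ 1 gap_cv).
    + apply Un_cv_const.
  - intros k. unfold useq. destruct (lt_dec i N).
    + apply pit_step; auto.
    + rewrite Rminus_diag, Rabs_R0. apply Rdiv_le_0_compat; auto. assert (H := mk_Mk (S k)); lra.
Qed.

Definition pstar i := proj1_sig (R_complete (useq i) (useq_cauchy i)).

Lemma Un_cv_unshift (v : nat -> R) l : Un_cv (fun k => v (S k)) l -> Un_cv v l.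
Proof. intros H eps He. destruct (H eps He) as [N0 HN0]. exists (S N0). intros k Hk.
  destruct k; [lia|]. apply HN0; lia. Qed.

Lemma pit_cv1 i : (i < N)%nat -> Un_cv (fun k => pit N K W p0 (S k) i) (pstar i).
Proof. intros Hi. unfold pstar. destruct (R_complete (useq i) (useq_cauchy i)) as [l Hl]. simpl.
  apply (Un_cv_ext (useq i)); auto. intros t; unfold useq; destruct (lt_dec i N); auto; lia. Qed.

Lemma pit_cv i : (i < N)%nat -> Un_cv (fun k => pit N K W p0 k i) (pstar i).
Proof. intros Hi. apply Un_cv_unshift. apply pit_cv1; auto. Qed.

Lemma T_cont (q : nat -> nat -> R) (l : nat -> R) i : (forall j, (j < N)%nat -> Un_cv (fun t => q t j) (l j)) ->
  Un_cv (fun t => Tg N K W (q t) i) (Tg N K W l i).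
Proof. intros H. unfold Tg. apply (Un_cv_maxN (K i - 1) (fun t k => sumN N (fun j => W i k j * q t j))).
  intros k _. apply (Un_cv_sumN N (fun t j => W i k j * q t j)). intros j Hj. apply Un_cv_scal; auto. Qed.

Lemma pstar_eig i : (i < N)%nat -> Tg N K W pstar i = lam * pstar i.
Proof. intros Hi.
  assert (H1 : Un_cv (fun t => Tg N K W (pit N K W p0 (S t)) i) (Tg N K W pstar i)).
  { apply T_cont. intros; apply pit_cv1; auto. }
  assert (Hr : Un_cv (fun t => enorm N (Tg N K W (pit N K W p0 (S t)))) lam).
  { apply (Un_cv_squeeze _ (fun t => mk (S t)) (fun t => Mk (S t))).
    - apply r_bounds.
    - exact (Un_cv_shift _ _ 1 (proj1 lam_cv)).
    - exact (Un_cv_shift _ _ 1 (proj2 lam_cv)). }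
  assert (H2 : Un_cv (fun t => enorm N (Tg N K W (pit N K W p0 (S t))) * pit N K W p0 (S (S t)) i) (lam * pstar i)).
  { apply CV_mult; auto. exact (Un_cv_shift _ _ 1 (pit_cv1 i Hi)). }
  apply (UL_sequence _ _ _ H1).
  eapply Un_cv_ext; [| exact H2]. intros t.
  change (pit N K W p0 (S (S t)) i) with (Tg N K W (pit N K W p0 (S t)) i / enorm N (Tg N K W (pit N K W p0 (S t)))).
  assert (0 < enorm N (Tg N K W (pit N K W p0 (S t)))) by (assert (H := r_bounds t); assert (H' := mk_pos (S t)); lra).
  cbv beta. change (pit N K W p0 (S (S t)) i) with (Tg N K W (pit N K W p0 (S t)) i / enorm N (Tg N K W (pit N K W p0 (S t)))). field; lra.
Qed.

Lemma pstar_nonneg i : (i < N)%nat -> 0 <= pstar i.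
Proof. intros Hi. apply (lim_ge _ _ 0 (pit_cv i Hi)). intros k; left; apply pit_pos; auto. Qed.

Lemma pstar_sq : sumN N (fun j => pstar j ^ 2) = 1.
Proof.
  assert (H : Un_cv (fun t => sumN N (fun j => pit N K W p0 (S t) j ^ 2)) (sumN N (fun j => pstar j ^ 2))).
  { apply (Un_cv_sumN N (fun t j => pit N K W p0 (S t) j ^ 2)). intros j Hj. simpl.
    apply CV_mult; [apply pit_cv1; auto|]. apply CV_mult; [apply pit_cv1; auto| apply Un_cv_const]. }
  apply (UL_sequence _ _ _ H). eapply Un_cv_ext; [| apply Un_cv_const]. intros t. cbv beta.
  assert (E := pit_norm t). unfold enorm in E.
  rewrite <- (sqrt_sqrt (sumN N (fun i => pit N K W p0 (S t) i ^ 2))) by apply sumN_sq_nonneg.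
  rewrite E; ring.
Qed.

Lemma Titer_pstar m i : (i < N)%nat -> Titer N K W m pstar i = lam ^ m * pstar i.
Proof. revert i; induction m; intros i Hi; simpl; [ring|].
  rewrite (T_ext N K W _ (fun j => lam ^ m * pstar j)) by auto.
  rewrite T_scal by (apply pow_le; left; apply lam_pos). rewrite pstar_eig; auto. ring. Qed.

Lemma pstar_pos : vpos N pstar.
Proof. intros i Hi. destruct HP as [Hn _].
  assert (Hs : 0 < sumN N pstar).
  { destruct (sumN_nz N (fun j => pstar j ^ 2)) as [j [Hj Hnz]]. rewrite pstar_sq; lra.
    assert (0 < pstar j) by (assert (H := pstar_nonneg j Hj); destruct H; auto; rewrite <- H in Hnz; simpl in Hnz; lra).
    eapply Rlt_le_trans; [exact H| apply (sumN_ge_term N pstar j); auto; apply pstar_nonneg]. }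
  destruct (Titer_exact N K W HK n pstar) as [l [Hl [Hsel E]]].
  assert (H1 : c * sumN N pstar <= Titer N K W n pstar i).
  { rewrite E by auto. rewrite <- sumN_scal. apply sumN_le. intros j Hj.
    destruct (HB l Hl Hsel i j Hi Hj). apply Rmult_le_compat_r; auto. apply pstar_nonneg; auto. }
  rewrite Titer_pstar in H1 by auto.
  assert (0 < lam ^ n) by (apply pow_lt; apply lam_pos).
  assert (0 < lam ^ n * pstar i) by nra.
  destruct (Rlt_le_dec 0 (pstar i)); auto. nra.
Qed.

End Iter.

Lemma cs_ineq a b c d : a * c + b * d <= sqrt (a ^ 2 + b ^ 2) * sqrt (c ^ 2 + d ^ 2).
Proof. rewrite <- sqrt_mult_alt by nra.
  destruct (Rle_dec (a * c + b * d) 0). - assert (H := sqrt_pos ((a ^ 2 + b ^ 2) * (c ^ 2 + d ^ 2))). lra.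
  - apply Rle_trans with (sqrt ((a * c + b * d) * (a * c + b * d))); [rewrite sqrt_square; lra| apply sqrt_le_1_alt; assert (0 <= (a * d - b * c) ^ 2) by apply pow2_ge_0; nra]. Qed.

Lemma tri2 a b c d : sqrt ((a + c) ^ 2 + (b + d) ^ 2) <= sqrt (a ^ 2 + b ^ 2) + sqrt (c ^ 2 + d ^ 2).
Proof. assert (H := cs_ineq a b c d).
  assert (H1 := sqrt_pos (a ^ 2 + b ^ 2)). assert (H2 := sqrt_pos (c ^ 2 + d ^ 2)).
  assert (E1 := sqrt_sqrt (a ^ 2 + b ^ 2) ltac:(nra)). assert (E2 := sqrt_sqrt (c ^ 2 + d ^ 2) ltac:(nra)).
  rewrite <- (sqrt_square (sqrt (a ^ 2 + b ^ 2) + sqrt (c ^ 2 + d ^ 2))) by lra.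
  apply sqrt_le_1_alt. nra. Qed.

Lemma minkowski n (u v : nat -> R) : sqrt (sumN n u ^ 2 + sumN n v ^ 2) <= sumN n (fun j => sqrt (u j ^ 2 + v j ^ 2)).
Proof. induction n.
  - simpl. apply Rle_trans with (sqrt 0); [apply sqrt_le_1_alt; lra| rewrite sqrt_0; lra].
  - change (sqrt ((sumN n u + u n) ^ 2 + (sumN n v + v n) ^ 2) <=
      sumN n (fun j => sqrt (u j ^ 2 + v j ^ 2)) + sqrt (u n ^ 2 + v n ^ 2)).
    eapply Rle_trans; [apply tri2| lra]. Qed.

Section Spec.
Context (N : nat) (K : nat -> nat) (W : nat -> nat -> nat -> R) (lam : R) (p : nat -> R).
Hypothesis HN : (1 <= N)%nat.
Hypothesis HK : Kpos N K.
Hypothesis HW : Wpos N K W.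
Hypothesis Hp : vpos N p.
Hypothesis Heig : forall i, (i < N)%nat -> Tg N K W p i = lam * p i.

Lemma eig_bound s a b : is_sel N K s -> is_eigenvalue N (Zs W s) a b -> sqrt (a ^ 2 + b ^ 2) <= lam.
Proof. intros Hs [x [y [[i1 [Hi1 Hnz]] He]]].
  set (w := fun j => sqrt (x j ^ 2 + y j ^ 2)).
  set (nu := sqrt (a ^ 2 + b ^ 2)).
  assert (Hw0 : forall j, 0 <= w j) by (intros; apply sqrt_pos).
  assert (C1 : forall i, (i < N)%nat -> nu * w i <= sumN N (fun j => Zs W s i j * w j)).
  { intros i Hi. destruct (He i Hi) as [E1 E2]. unfold nu, w.
    rewrite <- sqrt_mult_alt by nra.
    replace ((a ^ 2 + b ^ 2) * (x i ^ 2 + y i ^ 2)) with ((a * x i - b * y i) ^ 2 + (a * y i + b * x i) ^ 2) by ring.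
    rewrite <- E1, <- E2. eapply Rle_trans; [apply minkowski|]. right. apply sumN_ext. intros j Hj.
    assert (0 <= Zs W s i j) by (unfold Zs; apply HW; auto).
    replace ((Zs W s i j * x j) ^ 2 + (Zs W s i j * y j) ^ 2) with ((Zs W s i j) ^ 2 * (x j ^ 2 + y j ^ 2)) by ring.
    rewrite sqrt_mult_alt by nra. rewrite sqrt_pow2; auto. }
  set (cs := maxN (N - 1) (fun j => w j / p j)).
  destruct (maxN_attained (N - 1) (fun j => w j / p j)) as [i0 [Hi0 Ei0]]. fold cs in Ei0.
  assert (Hle : forall j, (j < N)%nat -> w j <= cs * p j).
  { intros j Hj. assert (H := maxN_ge (N - 1) (fun j => w j / p j) j ltac:(lia)). fold cs in H.
    specialize (Hp j Hj). apply (Rmult_le_compat_r (p j)) in H; [|lra]. field_simplify in H; lra. }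
  assert (Hw1 : 0 < w i1) by (unfold w; apply sqrt_lt_R0; destruct Hnz; [assert (0 < x i1 ^ 2) by (simpl; nra) | assert (0 < y i1 ^ 2) by (simpl; nra)]; nra).
  assert (Hcs : 0 < cs).
  { assert (H := Hle i1 Hi1). specialize (Hp i1 Hi1). nra. }
  assert (Hi0N : (i0 < N)%nat) by lia.
  assert (Ew : w i0 = cs * p i0) by (rewrite Ei0; specialize (Hp i0 Hi0N); field; lra).
  assert (H1 := C1 i0 Hi0N).
  assert (H2 : sumN N (fun j => Zs W s i0 j * w j) <= cs * sumN N (fun j => Zs W s i0 j * p j)).
  { rewrite <- sumN_scal. apply sumN_le. intros j Hj. assert (0 <= Zs W s i0 j) by (unfold Zs; apply HW; auto).
    specialize (Hle j Hj). nra. }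
  assert (H3 := T_ge_sel N K W p s i0 Hs Hi0N). rewrite Heig in H3 by auto. unfold Zs in H2.
  assert (Hpi := Hp i0 Hi0N).
  assert (H4 : cs * sumN N (fun j => W i0 (s i0) j * p j) <= cs * (lam * p i0)) by (apply Rmult_le_compat_l; lra).
  assert (nu * (cs * p i0) <= lam * (cs * p i0)). { rewrite <- Ew. unfold Zs in H1. replace (lam * w i0) with (cs * (lam * p i0)) by (rewrite Ew; ring). lra. }
  assert (0 < cs * p i0) by nra. nra.
Qed.
End Spec.

Lemma Un_cv_inv u l m : Un_cv u l -> 0 < m -> (forall k, m <= u k) -> Un_cv (fun k => / u k) (/ l).
Proof. intros Hu Hm Hb. assert (Hl : m <= l) by (apply (lim_ge u l m Hu Hb)).
  intros eps He. destruct (Hu (eps * m * l)) as [N0 HN0]. { apply Rmult_lt_0_compat; [nra| lra]. }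
  exists N0. intros k Hk. specialize (HN0 k Hk). specialize (Hb k). unfold Rdist in *.
  replace (/ u k - / l) with ((l - u k) / (u k * l)) by (field; lra).
  unfold Rdiv. rewrite Rabs_mult, Rabs_minus_sym, Rabs_inv. rewrite (Rabs_right (u k * l)) by nra.
  assert (Hi : / (u k * l) <= / (m * l)) by (apply Rinv_le_contravar; nra).
  assert (Hi2 : 0 < / (m * l)) by (apply Rinv_0_lt_compat; nra).
  assert (Rabs (u k - l) * / (m * l) < eps).
  { replace eps with (eps * m * l * / (m * l)) by (field; nra). apply Rmult_lt_compat_r; auto. }
  assert (0 <= Rabs (u k - l)) by apply Rabs_pos. nra. Qed.

Definition Wm (mu : nat -> R) (g : nat -> nat -> nat -> R) : nat -> nat -> nat -> R :=
  fun i k j => delta i j - a_row mu g i k j.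

Lemma piter_pit N K mu g p0 k : piter N K mu g p0 k = pit N K (Wm mu g) p0 k.
Proof. induction k; simpl; auto. rewrite IHk. reflexivity. Qed.

Lemma frac_le a b c d : 0 < b -> 0 < d -> c * b <= a * d -> c / d <= a / b.
Proof. intros Hb Hd H.
  replace (c / d) with ((c * b) * / (b * d)) by (field; lra).
  replace (a / b) with ((a * d) * / (b * d)) by (field; lra).
  apply Rmult_le_compat_r; auto. left; apply Rinv_0_lt_compat; nra. Qed.

Theorem theorem3 (N : nat) (K : nat -> nat) (g : nat -> nat -> nat -> R)
  (sigma2 : R) (mu : nat -> R) (p0 : nat -> R)
  (HN : (1 <= N)%nat)
  (HK : forall i, (i < N)%nat -> (1 <= K i)%nat)
  (Hg : forall i k j, (i < N)%nat -> (k < K i)%nat -> (j < N)%nat -> 0 <= g i k j)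
  (Hgii : forall i k, (i < N)%nat -> (k < K i)%nat -> 0 < g i k i)
  (Hsigma : 0 < sigma2)
  (Hmu : forall i, (i < N)%nat -> 0 < mu i)
  (Hirr : forall s, is_sel N K s -> irreducible N (Zmat mu g s))
  (Hprim : primitive_set N K mu g)
  (Hp0 : forall i, (i < N)%nat -> 0 < p0 i) :
  exists rho : R,
    is_max_spectral_radius N K mu g rho /\
    Un_cv (beta_iter N K mu g p0) (/ rho) /\
    exists pstar : nat -> R,
      (forall i, (i < N)%nat -> Un_cv (fun k => piter N K mu g p0 k i) (pstar i)) /\
      (forall i, (i < N)%nat ->
         lim_infty (fun alpha => sinr N K g sigma2 (fun j => alpha * pstar j) i)
                   (/ rho * mu i)).
Proof.
  set (W := Wm mu g).
  assert (HW : Wpos N K W).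
  { intros i k j Hi Hk Hj. unfold W, Wm, delta, a_row.
    destruct (Nat.eqb_spec j i); destruct (Nat.eqb_spec i j); try lia.
    - lra.
    - assert (0 <= mu i * g i k j / g i k i).
      { unfold Rdiv. apply Rmult_le_pos; [apply Rmult_le_pos; [left; auto| auto]| left; apply Rinv_0_lt_compat; auto]. }
      lra. }
  destruct Hprim as [n [Hn Hpr]].
  assert (HP : Prim N K W n) by (split; auto).
  destruct (Pm_bounds N K W n Hpr) as [c [C [Hc HB]]].
  assert (HK' : Kpos N K) by exact HK.
  assert (Hp0' : vpos N p0) by exact Hp0.
  set (L := lam N K W n p0 c C HN HK' HW HP Hp0' Hc HB).
  set (ps := pstar N K W n p0 c C HN HK' HW HP Hp0' Hc HB).
  assert (HL : 0 < L) by apply lam_pos.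
  assert (Hps : vpos N ps) by apply pstar_pos.
  assert (Heig : forall i, (i < N)%nat -> Tg N K W ps i = L * ps i) by (intros; apply pstar_eig; auto).
  exists L. split; [|split].
  -
    split.
    + exists (selat N K W ps). split; [apply selat_sel; auto|]. split.
      * exists L, 0. split.
        -- exists ps, (fun _ => 0). split.
           ++ exists 0%nat. split; [lia| left; specialize (Hps 0%nat ltac:(lia)); lra].
           ++ intros i Hi. split.
              ** change (sumN N (fun j => Zs W (selat N K W ps) i j * ps j) = L * ps i - 0 * 0).
                 unfold Zs. rewrite <- T_sel, Heig by auto. ring.
              ** rewrite (sumN_ext N _ (fun _ => 0)) by (intros; ring). rewrite sumN_zero. ring.
        -- replace (L ^ 2 + 0 ^ 2) with (L ^ 2) by ring. rewrite sqrt_pow2; lra.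
      * intros a b He. exact (eig_bound N K W L ps HN HW Hps Heig (selat N K W ps) a b (selat_sel N K W ps HK') He).
    + intros s r Hs [[a [b [He E]]] _]. rewrite E.
      exact (eig_bound N K W L ps HN HW Hps Heig s a b Hs He).
  -
    assert (Hm0 := mk_pos N K W n p0 HN HK' HW HP Hp0' 0).
    assert (Hmk : forall k, mk N K W p0 0 <= mk N K W p0 k) by (intros; apply (mk_grow_le N K W n p0 HN HK' HW HP Hp0'); lia).
    assert (HMk : forall k, mk N K W p0 k <= Mk N K W p0 k) by (intros; apply (mk_Mk N K W n p0 HN HK' HW HP Hp0')).
    apply (Un_cv_squeeze _ (fun k => / Mk N K W p0 k) (fun k => / mk N K W p0 k)).
    + intros k. unfold beta_iter. rewrite piter_pit.
      change (/ Mk N K W p0 k <= minN (N - 1) (fun i => pit N K W p0 k i / Tg N K W (pit N K W p0 k) i) <= / mk N K W p0 k).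
      assert (Hb := pit_bounds N K W n p0 HN HK' HW HP Hp0' k).
      assert (Hpp := pit_pos N K W n p0 HN HK' HW HP Hp0' k).
      assert (Hm := mk_pos N K W n p0 HN HK' HW HP Hp0' k). specialize (HMk k).
      split.
      * apply minN_ge. intros i Hi. destruct (Hb i ltac:(lia)). specialize (Hpp i ltac:(lia)).
        rewrite <- (Rdiv_1_l (Mk N K W p0 k)). apply frac_le; nra.
      * eapply Rle_trans; [apply (minN_le _ _ 0%nat); lia|]. destruct (Hb 0%nat ltac:(lia)). specialize (Hpp 0%nat ltac:(lia)).
        rewrite <- (Rdiv_1_l (mk N K W p0 k)). apply frac_le; nra.
    + apply (Un_cv_inv _ _ (mk N K W p0 0)); auto. apply lam_cv. intros k; specialize (Hmk k); specialize (HMk k); lra.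
    + apply (Un_cv_inv _ _ (mk N K W p0 0)); auto. apply lam_cv.
  - exists ps. split.
    + intros i Hi. eapply Un_cv_ext; [| apply (pit_cv N K W n p0 c C HN HK' HW HP Hp0' Hc HB i Hi)].
      intros t; rewrite piter_pit; auto.
    + intros i Hi eps Heps.
      assert (Hpi := Hps i Hi). assert (Hmui := Hmu i Hi).
      set (D := fun k => sumN N (fun j => if Nat.eqb j i then 0 else g i k j * ps j)).
      assert (HD0 : forall k, (k < K i)%nat -> 0 <= D k).
      { intros k Hk. unfold D. apply sumN_nonneg. intros j Hj. destruct (Nat.eqb j i); [lra|].
        apply Rmult_le_pos; [apply Hg; auto| left; apply Hps; auto]. }
      assert (Hrow : forall k, (k < K i)%nat -> sumN N (fun j => W i k j * ps j) = mu i / g i k i * D k).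
      { intros k Hk. unfold D. rewrite <- sumN_scal. apply sumN_ext. intros j Hj.
        assert (0 < g i k i) by (apply Hgii; auto).
        unfold W, Wm, delta, a_row. destruct (Nat.eqb_spec j i); destruct (Nat.eqb_spec i j); try lia; field; lra. }
      assert (Hup : forall k, (k < K i)%nat -> mu i * D k <= L * ps i * g i k i).
      { intros k Hk. assert (Hgk : 0 < g i k i) by (apply Hgii; auto).
        assert (H1 := maxN_ge (K i - 1) (fun k => sumN N (fun j => W i k j * ps j)) k ltac:(lia)).
        change (maxN (K i - 1) (fun k => sumN N (fun j => W i k j * ps j))) with (Tg N K W ps i) in H1.
        rewrite Heig, Hrow in H1 by auto.
        apply (Rmult_le_compat_r (g i k i)) in H1; [|lra]. replace (mu i / g i k i * D k * g i k i) with (mu i * D k) in H1 by (field; lra).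
        lra. }
      set (kst := selat N K W ps i).
      assert (Hkst : (kst < K i)%nat) by (apply (selat_sel N K W ps HK'); auto).
      assert (Heq : mu i * D kst = L * ps i * g i kst i).
      { assert (Hgk : 0 < g i kst i) by (apply Hgii; auto).
        assert (H1 := T_sel N K W ps i). fold kst in H1. rewrite Heig, Hrow in H1 by auto.
        apply (f_equal (fun x => x * g i kst i)) in H1. replace (mu i / g i kst i * D kst * g i kst i) with (mu i * D kst) in H1 by (field; lra).
        lra. }
      set (G := maxN (K i - 1) (fun k => / g i k i)).
      assert (HG : forall k, (k < K i)%nat -> 1 <= g i k i * G).
      { intros k Hk. assert (Hgk : 0 < g i k i) by (apply Hgii; auto).
        assert (H1 := maxN_ge (K i - 1) (fun k => / g i k i) k ltac:(lia)). fold G in H1.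
        apply (Rmult_le_compat_l (g i k i)) in H1; [|lra]. rewrite Rinv_r in H1; lra. }
      assert (HG0 : 0 < G).
      { assert (H1 := HG 0%nat ltac:(specialize (HK i Hi); lia)). assert (0 < g i 0%nat i) by (apply Hgii; auto; specialize (HK i Hi); lia).
        destruct (Rlt_le_dec 0 G); auto. nra. }
      set (Q := mu i * mu i * sigma2 * G / (L * L * ps i)).
      assert (HQ : 0 <= Q).
      { unfold Q. apply Rdiv_le_0_compat; [| apply Rmult_lt_0_compat; nra].
        apply Rmult_le_pos; [| lra]. apply Rmult_le_pos; nra. }
      exists (Q / eps). intros alpha Ha.
      assert (Hal : 0 < alpha) by (assert (0 <= Q / eps) by (apply Rdiv_le_0_compat; auto); lra).
      assert (HQa : Q / alpha < eps).
      { apply (Rmult_lt_reg_r alpha); auto. unfold Rdiv. rewrite Rmult_assoc, Rinv_l, Rmult_1_r by lra.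
        apply (Rmult_lt_reg_r (/ eps)); [apply Rinv_0_lt_compat; auto|].
        replace (eps * alpha * / eps) with alpha by (field; lra). exact Ha. }
      assert (Hsk : forall k, sinr_k N g sigma2 (fun j => alpha * ps j) i k = g i k i * (alpha * ps i) / (alpha * D k + sigma2)).
      { intros k. unfold sinr_k. f_equal. f_equal. unfold D. rewrite <- sumN_scal. apply sumN_ext.
        intros j Hj. destruct (Nat.eqb j i); ring. }
      set (T := / L * mu i).
      assert (Hlow : forall k, (k < K i)%nat -> T - Q / alpha <= sinr_k N g sigma2 (fun j => alpha * ps j) i k).
      { intros k Hk. rewrite Hsk. assert (Hgk : 0 < g i k i) by (apply Hgii; auto).
        assert (HDk := HD0 k Hk). assert (Hupk := Hup k Hk). assert (HGk := HG k Hk).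
        set (X := alpha * L * ps i + sigma2 * mu i * G).
        assert (HX : alpha * L * ps i <= X) by (unfold X; assert (0 < sigma2 * mu i * G) by (apply Rmult_lt_0_compat; nra); lra).
        assert (HX0 : 0 < alpha * L * ps i) by (apply Rmult_lt_0_compat; [nra| lra]).
        apply Rle_trans with (alpha * ps i * mu i / X).
        - assert (E1 : T - alpha * ps i * mu i / X = mu i * mu i * sigma2 * G / (L * X)) .
          { assert (HXp : 0 < alpha * L * ps i + sigma2 * mu i * G) by (unfold X in HX; lra). unfold T, X. field. repeat split; lra. }
          assert (E2 : Q / alpha = mu i * mu i * sigma2 * G / (L * (alpha * L * ps i))) by (unfold Q; field; repeat split; lra).
          assert (0 <= mu i * mu i * sigma2 * G) by (apply Rmult_le_pos; [apply Rmult_le_pos; nra| lra]).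
          assert (mu i * mu i * sigma2 * G / (L * X) <= mu i * mu i * sigma2 * G / (L * (alpha * L * ps i))).
          { apply frac_le; [nra| nra|]. apply Rmult_le_compat_l; auto. nra. }
          lra.
        - apply frac_le; [nra| lra|].
          assert (Hap : 0 < alpha * ps i) by nra.
          assert (alpha * (mu i * D k) <= alpha * (L * ps i * g i k i)) by (apply Rmult_le_compat_l; lra).
          assert (mu i * sigma2 <= g i k i * G * (mu i * sigma2)) by (assert (0 < mu i * sigma2) by nra; nra).
          unfold X. nra. }
      assert (Hhigh : sinr_k N g sigma2 (fun j => alpha * ps j) i kst <= T).
      { rewrite Hsk. assert (Hgk : 0 < g i kst i) by (apply Hgii; auto). assert (HDk := HD0 kst Hkst).
        unfold T. replace (/ L * mu i) with (mu i / L) by (unfold Rdiv; ring).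
        apply frac_le; [lra| nra|]. nra. }
      unfold sinr.
      assert (B1 : T - Q / alpha <= minN (K i - 1) (fun k => sinr_k N g sigma2 (fun j => alpha * ps j) i k)).
      { apply minN_ge. intros k Hk. apply Hlow. specialize (HK i Hi); lia. }
      assert (B2 : minN (K i - 1) (fun k => sinr_k N g sigma2 (fun j => alpha * ps j) i k) <= T).
      { eapply Rle_trans; [apply (minN_le _ _ kst); lia| exact Hhigh]. }
      fold T. apply Rabs_def1; lra.
Qed.
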